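(* Let $\rho=\eta[r,\alpha]$ be a qubit state with $r\ne g$. For every code $\tilde{\mathcal C}=\{(p_j,\eta[s_j,\beta_j])\}\in\mathscr C(\rho)$, the paired code $\mathcal C=\{(p_j/2,\eta[s_j,\beta_j]),(p_j/2,\eta[s_j,-\beta_j])\}$ also lies in $\mathscr C(\rho)$ and satisfies $\chi(\mathcal C)\ge\chi(\tilde{\mathcal C})$. Consequently, $I_{\mathrm{th}}(\rho)$ equals the supremum of $\chi$ over codes of the form $\{(p_j/2,\eta[s_j,\pm\kappa_{s_j}e^{i\phi_j}])\}$ with $s_j\in J$, $\phi_j\in\mathbb R$ and $(p_j)$ a probability vector.
   Context: Qubit memory with Hamiltonian $E_0|0\rangle\langle0|+E_1|1\rangle\langle1|$ at temperature $T$; $\lambda=e^{-(E_1-E_0)/k_{\mathrm B}T}$, $g=1/(1+\lambda)$ (the ground population of the Gibbs state). $\eta[r,\alpha]$ denotes the density matrix $\begin{pmatrix} r&\alpha\\ \alpha^*&1-r\end{pmatrix}$ in the energy basis. $J$ is the closed interval with endpoints $r$ and $1-\lambda r$. The set of states reachable from $\rho$ by thermal operations is $\vartheta(\rho)=\{\eta[s,\beta]: s\in J,\ |\beta|\le\kappa_s\}$ with $\kappa_s=|\alpha|\frac{\sqrt{(\lambda s+r-1)(\lambda r+s-1)}}{|(\lambda+1)r-1|}$. A code is a finite ensemble $\{(p_k,\sigma^{(k)})\}$; $\chi=S(\sum_kp_k\sigma^{(k)})-\sum_kp_kS(\sigma^{(k)})$ (von Neumann entropy, base 2); $\mathscr C(\rho)$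 is the set of codes with codewords in $\vartheta(\rho)$; $I_{\mathrm{th}}(\rho)=\sup_{\mathcal C\in\mathscr C(\rho)}\chi(\mathcal C)$. *)

(* Defs.v *)
From Stdlib Require Import Reals Lra List.
Import ListNotations.
Open Scope R_scope.

Definition Cx : Type := (R * R)%type.
Definition Cnorm (z : Cx) : R := sqrt (fst z * fst z + snd z * snd z).
Definition Copp (z : Cx) : Cx := (- fst z, - snd z).
Definition Cadd (z w : Cx) : Cx := (fst z + fst w, snd z + snd w).
Definition Cscal (a : R) (z : Cx) : Cx := (a * fst z, a * snd z).
Definition Cpolar (k phi : R) : Cx := (k * cos phi, k * sin phi).

(* lambda = exp(-(E1-E0)/(k_B T)), passing kT := k_B T *)
Definition lam (E0 E1 kT : R) : R := exp (- (E1 - E0) / kT).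
Definition gibbs_g (l : R) : R := 1 / (1 + l).

(* eta[r,alpha] is represented by the pair (r, alpha).  A state is valid
   (positive semidefinite, trace one) iff 0 <= r <= 1 and |alpha|^2 <= r(1-r). *)
Definition is_state (r : R) (a : Cx) : Prop :=
  0 <= r <= 1 /\ Cnorm a * Cnorm a <= r * (1 - r).

Definition inJ (l r s : R) : Prop :=
  Rmin r (1 - l * r) <= s <= Rmax r (1 - l * r).

Definition kappa (l r : R) (a : Cx) (s : R) : R :=
  Cnorm a * sqrt ((l * s + r - 1) * (l * r + s - 1)) / Rabs ((l + 1) * r - 1).

(* theta(rho): states reachable by thermal operations *)
Definition reachable (l r : R) (a : Cx) (s : R) (b : Cx) : Prop :=
  inJ l r s /\ Cnorm b <= kappa l r a s.

(* von Neumann entropy (base 2) of eta[s,beta], computed from its two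
   eigenvalues (1 +- sqrt((2s-1)^2 + 4|beta|^2))/2, with 0 log 0 = 0. *)
Definition log2 (x : R) : R := ln x / ln 2.
Definition etaf (x : R) : R := if Rlt_dec 0 x then - x * log2 x else 0.
Definition vN (s : R) (b : Cx) : R :=
  let d := sqrt ((2 * s - 1) ^ 2 + 4 * (Cnorm b * Cnorm b)) in
  etaf ((1 + d) / 2) + etaf ((1 - d) / 2).

(* A code: finite list of (p_k, (s_k, beta_k)) meaning (p_k, eta[s_k,beta_k]). *)
Definition code : Type := list (R * (R * Cx)).

Definition prob_sum (c : code) : R := fold_right (fun x acc => fst x + acc) 0 c.
Definition is_prob (c : code) : Prop :=
  Forall (fun x => 0 <= fst x) c /\ prob_sum c = 1.

(* average state sum_k p_k sigma^(k) = eta[sum p s, sum p beta] *)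
Definition avg_s (c : code) : R :=
  fold_right (fun x acc => fst x * fst (snd x) + acc) 0 c.
Definition avg_b (c : code) : Cx :=
  fold_right (fun x acc => Cadd (Cscal (fst x) (snd (snd x))) acc) (0, 0) c.

Definition chi (c : code) : R :=
  vN (avg_s c) (avg_b c)
  - fold_right (fun x acc => fst x * vN (fst (snd x)) (snd (snd x)) + acc) 0 c.

Definition in_codes (l r : R) (a : Cx) (c : code) : Prop :=
  is_prob c /\ Forall (fun x => reachable l r a (fst (snd x)) (snd (snd x))) c.

Definition paired (c : code) : code :=
  flat_map (fun x => [ (fst x / 2, (fst (snd x), snd (snd x)));
                       (fst x / 2, (fst (snd x), Copp (snd (snd x)))) ]) c.

Definition extremal_code (l r : R) (a : Cx) (d : list (R * (R * R))) : code :=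
  flat_map (fun x =>
    let p := fst x in let s := fst (snd x) in let phi := snd (snd x) in
    [ (p / 2, (s, Cpolar (kappa l r a s) phi));
      (p / 2, (s, Copp (Cpolar (kappa l r a s) phi))) ]) d.

Definition extremal_data_ok (l r : R) (d : list (R * (R * R))) : Prop :=
  Forall (fun x => 0 <= fst x) d /\
  fold_right (fun x acc => fst x + acc) 0 d = 1 /\
  Forall (fun x => inJ l r (fst (snd x))) d.

(* Main.v *)
Require Import Defs.
From Stdlib Require Import Reals List Lra.
From Coquelicot Require Import Coquelicot.
Require Import Defs.
Open Scope R_scope.

Lemma H_deriv c : 0 < c < 1 ->
  derivable_pt_lim (fun t => -t * ln t - (1-t)*ln(1-t)) c (ln(1-c) - ln c).
Proof.
  intros Hc. apply is_derive_Reals. auto_derive.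
  - lra.
  - replace (1 + - c) with (1 - c) by ring. change RinvImpl.Rinv with Rinv. field. lra.
Qed.

Lemma H_dec x y : 1/2 <= x -> x <= y -> y < 1 ->
  -y * ln y - (1-y)*ln(1-y) <= -x * ln x - (1-x)*ln(1-x).
Proof.
  intros Hx Hxy Hy.
  destruct (Req_dec x y) as [->|Hne]; [lra|].
  destruct (MVT_cor2 (fun t => -t * ln t - (1-t)*ln(1-t)) (fun c => ln(1-c) - ln c) x y)
    as [c [Hc1 Hc2]]; [lra| |].
  - intros c Hc. apply H_deriv. lra.
  - simpl in Hc1.
    assert (ln (1-c) <= ln c) by (apply ln_le; lra).
    assert ((ln (1 - c) - ln c) * (y - x) <= 0).
    { nra. } lra.
Qed.

Lemma ln2_pos : 0 < ln 2.
Proof. rewrite <- ln_1. apply ln_increasing; lra. Qed.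

Lemma etaf_nonpos_ge1 y : 1 <= y -> etaf y <= 0.
Proof.
  intros H. unfold etaf, log2. destruct (Rlt_dec 0 y); [|lra].
  assert (0 <= ln y) by (rewrite <- ln_1; apply ln_le; lra).
  pose proof ln2_pos.
  assert (0 <= ln y / ln 2) by (apply Rdiv_le_0_compat; lra). nra.
Qed.

Lemma etaf_nonneg_le1 y : y <= 1 -> 0 <= etaf y.
Proof.
  intros H. unfold etaf, log2. destruct (Rlt_dec 0 y); [|lra].
  assert (ln y <= 0) by (rewrite <- ln_1; apply ln_le; lra).
  pose proof ln2_pos.
  assert (ln y / ln 2 <= 0).
  { unfold Rdiv. assert (0 < / ln 2) by (apply Rinv_0_lt_compat; lra). nra. }
  nra.
Qed.

Lemma etaf_le0 y : y <= 0 -> etaf y = 0.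
Proof. intros H. unfold etaf. destruct (Rlt_dec 0 y); lra. Qed.

Lemma etaf_pos y : 0 < y -> etaf y = (- y * ln y) / ln 2.
Proof. intros H. unfold etaf, log2. destruct (Rlt_dec 0 y); [|lra]. unfold Rdiv. ring. Qed.

Lemma g_dec x y : 1/2 <= x -> x <= y ->
  etaf y + etaf (1-y) <= etaf x + etaf (1-x).
Proof.
  intros Hx Hxy. pose proof ln2_pos.
  destruct (Rle_lt_dec 1 x) as [H1|H1].
  - rewrite !(etaf_le0 (1 - _)) by lra.
    rewrite !etaf_pos by lra.
    assert (0 <= ln x) by (rewrite <- ln_1; apply ln_le; lra).
    assert (ln x <= ln y) by (apply ln_le; lra).
    assert (x * ln x <= y * ln y) by nra.
    unfold Rdiv. assert (0 < / ln 2) by (apply Rinv_0_lt_compat; lra). nra.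
  - destruct (Rle_lt_dec 1 y) as [H2|H2].
    + rewrite (etaf_le0 (1-y)) by lra.
      pose proof (etaf_nonpos_ge1 y H2).
      pose proof (etaf_nonneg_le1 x ltac:(lra)).
      pose proof (etaf_nonneg_le1 (1-x) ltac:(lra)). lra.
    + rewrite !etaf_pos by lra.
      pose proof (H_dec x y Hx Hxy H2).
      unfold Rdiv. assert (0 < / ln 2) by (apply Rinv_0_lt_compat; lra). nra.
Qed.

Lemma Cnorm_nonneg b : 0 <= Cnorm b.
Proof. unfold Cnorm. apply sqrt_pos. Qed.

Lemma vN_mono s b1 b2 : Cnorm b1 <= Cnorm b2 -> vN s b2 <= vN s b1.
Proof.
  intros H. unfold vN.
  pose proof (Cnorm_nonneg b1).
  set (d1 := sqrt ((2 * s - 1) ^ 2 + 4 * (Cnorm b1 * Cnorm b1))).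
  set (d2 := sqrt ((2 * s - 1) ^ 2 + 4 * (Cnorm b2 * Cnorm b2))).
  assert (d1 <= d2) by (apply sqrt_le_1_alt; nra).
  assert (0 <= d1) by apply sqrt_pos.
  replace ((1 - d1) / 2) with (1 - (1 + d1) / 2) by field.
  replace ((1 - d2) / 2) with (1 - (1 + d2) / 2) by field.
  apply g_dec; lra.
Qed.

Lemma Cnorm_Copp b : Cnorm (Copp b) = Cnorm b.
Proof. unfold Cnorm, Copp. simpl. f_equal. ring. Qed.

Lemma Cnorm_polar k phi : 0 <= k -> Cnorm (Cpolar k phi) = k.
Proof.
  intros H. unfold Cnorm, Cpolar. simpl.
  replace (k * cos phi * (k * cos phi) + k * sin phi * (k * sin phi))
    with (k * k * (Rsqr (sin phi) + Rsqr (cos phi))) by (unfold Rsqr; ring).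
  rewrite sin2_cos2. rewrite Rmult_1_r. apply sqrt_square. lra.
Qed.

Lemma Cnorm_0 : Cnorm (0,0) = 0.
Proof. unfold Cnorm. simpl. rewrite Rmult_0_l, Rplus_0_l. apply sqrt_0. Qed.

Lemma kappa_nonneg l r a s : 0 <= kappa l r a s.
Proof.
  unfold kappa. pose proof (Cnorm_nonneg a). pose proof (sqrt_pos ((l * s + r - 1) * (l * r + s - 1))).
  destruct (Req_dec (Rabs ((l + 1) * r - 1)) 0) as [E|E].
  - rewrite E. unfold Rdiv. rewrite Rinv_0. lra.
  - apply Rdiv_le_0_compat; [nra|]. pose proof (Rabs_pos ((l + 1) * r - 1)). lra.
Qed.

Definition Ent (c : code) : R :=
  fold_right (fun x acc => fst x * vN (fst (snd x)) (snd (snd x)) + acc) 0 c.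

Lemma chi_Ent c : chi c = vN (avg_s c) (avg_b c) - Ent c.
Proof. reflexivity. Qed.

Lemma avg_b_paired c : avg_b (paired c) = (0,0).
Proof.
  induction c as [|x c IH]; [reflexivity|].
  simpl. change (flat_map _ c) with (paired c). rewrite IH.
  unfold Cadd, Cscal, Copp. simpl. f_equal; field.
Qed.

Lemma avg_s_paired c : avg_s (paired c) = avg_s c.
Proof.
  induction c as [|x c IH]; [reflexivity|].
  simpl. change (flat_map _ c) with (paired c). rewrite IH. field.
Qed.

Lemma prob_sum_paired c : prob_sum (paired c) = prob_sum c.
Proof.
  induction c as [|x c IH]; [reflexivity|].
  simpl. change (flat_map _ c) with (paired c). rewrite IH. field.
Qed.

Lemma Ent_paired c : Ent (paired c) = Ent c.
Proof.
  induction c as [|x c IH]; [reflexivity|].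
  simpl. change (flat_map _ c) with (paired c).
  change (fold_right _ 0 (paired c)) with (Ent (paired c)).
  change (fold_right _ 0 c) with (Ent c). rewrite IH.
  unfold vN at 2. rewrite Cnorm_Copp. fold (vN (fst (snd x)) (snd (snd x))). field.
Qed.

Lemma chi_paired c : chi (paired c) = vN (avg_s c) (0,0) - Ent c.
Proof. rewrite chi_Ent, avg_b_paired, avg_s_paired, Ent_paired. reflexivity. Qed.

Lemma chi_paired_ge c : chi (paired c) >= chi c.
Proof.
  rewrite chi_paired, chi_Ent.
  assert (vN (avg_s c) (avg_b c) <= vN (avg_s c) (0,0)).
  { apply vN_mono. rewrite Cnorm_0. apply Cnorm_nonneg. }
  lra.
Qed.

Lemma paired_in l r a c : in_codes l r a c -> in_codes l r a (paired c).
Proof.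
  intros [[Hp Hs] Hr]. split; [split|].
  - clear Hs Hr. induction Hp as [|x c Hx Hc IH]; simpl; [constructor|].
    constructor; [simpl; lra|]. constructor; [simpl; lra|]. exact IH.
  - rewrite prob_sum_paired. exact Hs.
  - clear Hp Hs. induction Hr as [|x c Hx Hc IH]; simpl; [constructor|].
    destruct Hx as [HJ Hk].
    constructor; [split; assumption|]. constructor; [|exact IH].
    split; [assumption|]. simpl. rewrite Cnorm_Copp. assumption.
Qed.

Definition hmap (l r : R) (a : Cx) (x : R * (R * R)) : R * (R * Cx) :=
  (fst x, (fst (snd x), Cpolar (kappa l r a (fst (snd x))) (snd (snd x)))).

Lemma ext_eq l r a d : extremal_code l r a d = paired (map (hmap l r a) d).
Proof. induction d as [|x d IH]; [reflexivity|]. simpl. rewrite IH. reflexivity. Qed.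

Lemma map_h_in l r a d : extremal_data_ok l r d -> in_codes l r a (map (hmap l r a) d).
Proof.
  intros [Hp [Hs HJ]]. split; [split|].
  - clear Hs HJ. induction Hp; simpl; constructor; auto.
  - rewrite <- Hs. clear. induction d; simpl; [reflexivity|]. rewrite IHd. reflexivity.
  - clear Hp Hs. induction HJ; simpl; constructor; auto.
    split; [assumption|]. simpl. rewrite Cnorm_polar by apply kappa_nonneg. lra.
Qed.

Definition dat (c : code) : list (R * (R * R)) :=
  map (fun x => (fst x, (fst (snd x), 0))) c.

Lemma dat_ok l r a c : in_codes l r a c -> extremal_data_ok l r (dat c).
Proof.
  intros [[Hp Hs] Hr]. split; [|split].
  - clear Hs Hr. induction Hp; simpl; constructor; auto.
  - rewrite <- Hs. clear. induction c; simpl; [reflexivity|]. rewrite IHc. reflexivity.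
  - clear Hp Hs. induction Hr as [|x c Hx]; simpl; constructor; auto. apply Hx.
Qed.

Lemma avg_s_hd l r a c : avg_s (map (hmap l r a) (dat c)) = avg_s c.
Proof. induction c; simpl; [reflexivity|]. rewrite IHc. reflexivity. Qed.

Lemma Ent_hd l r a c : in_codes l r a c -> Ent (map (hmap l r a) (dat c)) <= Ent c.
Proof.
  intros [[Hp _] Hr]. induction c as [|x c IH]; simpl; [lra|].
  inversion Hp; subst. inversion Hr; subst.
  change (fold_right _ 0 (map _ (map _ c))) with (Ent (map (hmap l r a) (dat c))).
  change (fold_right _ 0 c) with (Ent c).
  specialize (IH H2 H4).
  destruct H3 as [_ Hk].
  assert (vN (fst (snd x)) (Cpolar (kappa l r a (fst (snd x))) 0) <= vN (fst (snd x)) (snd (snd x))).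
  { apply vN_mono. rewrite Cnorm_polar by apply kappa_nonneg. exact Hk. }
  simpl. nra.
Qed.

Theorem lemmaS1 (E0 E1 kT r : R) (a : Cx) :
  0 < kT ->
  is_state r a ->
  r <> gibbs_g (lam E0 E1 kT) ->
  (forall c : code, in_codes (lam E0 E1 kT) r a c ->
     in_codes (lam E0 E1 kT) r a (paired c) /\ chi (paired c) >= chi c)
  /\
  (forall I : R,
     is_lub (fun x => exists c : code, in_codes (lam E0 E1 kT) r a c /\ x = chi c) I
     <->
     is_lub (fun x => exists d : list (R * (R * R)),
                extremal_data_ok (lam E0 E1 kT) r d /\
                x = chi (extremal_code (lam E0 E1 kT) r a d)) I).
Proof.
  intros _ _ _. set (l := lam E0 E1 kT).
  split.
  { intros c Hc. split; [apply paired_in; exact Hc | apply chi_paired_ge]. }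
  assert (HB : forall d, extremal_data_ok l r d -> in_codes l r a (extremal_code l r a d)).
  { intros d Hd. rewrite ext_eq. apply paired_in. apply map_h_in. exact Hd. }
  assert (HA : forall c, in_codes l r a c -> chi c <= chi (extremal_code l r a (dat c))).
  { intros c Hc. pose proof (chi_paired_ge c).
    rewrite ext_eq, chi_paired. rewrite chi_paired in H.
    rewrite avg_s_hd. pose proof (Ent_hd l r a c Hc). lra. }
  assert (Hub : forall b,
    is_upper_bound (fun x => exists c : code, in_codes l r a c /\ x = chi c) b <->
    is_upper_bound (fun x => exists d : list (R * (R * R)),
                extremal_data_ok l r d /\ x = chi (extremal_code l r a d)) b).
  { intros b. split; intros Hb x Hx.
    - destruct Hx as [d [Hd ->]]. apply Hb. exists (extremal_code l r a d). split; auto.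
    - destruct Hx as [c [Hc ->]]. apply Rle_trans with (chi (extremal_code l r a (dat c))).
      + apply HA; exact Hc.
      + apply Hb. exists (dat c). split; [eapply dat_ok; exact Hc | reflexivity]. }
  intros I. unfold is_lub. split; intros [H1 H2]; split.
  - apply Hub; exact H1.
  - intros b Hb. apply H2. apply Hub. exact Hb.
  - apply Hub; exact H1.
  - intros b Hb. apply H2. apply Hub. exact Hb.
Qed.
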